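(* For every $n\ge4$, the word formed by the first $F_n$ letters of $\mathcal S$ equals the word formed by the letters of $\mathcal S$ in positions $F_n+1,\dots,2F_n$.
   Context: Fibonacci numbers: $F_1=F_2=1$, $F_{n+1}=F_n+F_{n-1}$ for $n\ge2$. Golden string: define finite words over $\{A,B\}$ by $S_1=B$, $S_2=BA$, $S_n=S_{n-1}:S_{n-2}$ for $n\ge3$, where $:$ denotes concatenation; each $S_n$ is a prefix of $S_{n+1}$, and $\mathcal S$ is the infinite word having every $S_n$ as a prefix ($\mathcal S=BABBABABBABB\ldots$). Letters of $\mathcal S$ are indexed starting at $1$. *)

(* Defs.v *)
From mathcomp Require Import all_boot.
Set Implicit Arguments. Unset Strict Implicit. Unset Printing Implicit Defensive.

Inductive letter := A | B.

Fixpoint fib (n : nat) : nat :=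
  match n with
  | 0 => 0
  | 1 => 1
  | (m.+1 as p).+1 => fib p + fib m
  end.

(* Golden words: S 1 = B, S 2 = BA, S n = S (n-1) ++ S (n-2) for n >= 3.
   (S 0 is an unused filler value.) *)
Fixpoint golden_word (n : nat) : seq letter :=
  match n with
  | 0 => [:: A]
  | 1 => [:: B]
  | 2 => [:: B; A]
  | (m.+1 as p).+1 => golden_word p ++ golden_word m
  end.

(* s : nat -> letter (1-indexed) is the infinite golden string: every S_n
   (n >= 1) is a prefix of it. *)
Definition is_golden_string (s : nat -> letter) : Prop :=
  forall n, 1 <= n -> forall i, i < size (golden_word n) ->
    s i.+1 = nth A (golden_word n) i.

(* Main.v *)
Require Import Defs.
From mathcomp Require Import all_boot zify.

Lemma gwS k : golden_word k.+3 = golden_word k.+2 ++ golden_word k.+1.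
Proof. by []. Qed.

Lemma fibS k : fib k.+2 = fib k.+1 + fib k.
Proof. by []. Qed.

Lemma gw_size n : size (golden_word n.+1) = fib n.+2 /\ size (golden_word n.+2) = fib n.+3.
Proof.
elim: n => [|n [IH1 IH2]]; first by split.
split; first by [].
by rewrite gwS size_cat IH1 IH2 [fib n.+3.+1]fibS addnC.
Qed.

Lemma gw_sz n : size (golden_word n.+1) = fib n.+2.
Proof. by case: (gw_size n). Qed.

Lemma gw_pre m i : i < size (golden_word m.+1) ->
  nth A (golden_word m.+2) i = nth A (golden_word m.+1) i.
Proof.
case: m => [|m] Hi; first by case: i Hi => [|[]].
by rewrite gwS nth_cat Hi.
Qed.

Theorem proposition2p1 (s : nat -> letter) (hs : is_golden_string s) :
  forall n, 4 <= n -> forall i, 1 <= i <= fib n -> s i = s (fib n + i).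
Proof.
move=> n Hn i /andP [Hi1 Hi2].
case: n Hn Hi2 => [|[|[|[|k]]]] // _ Hi2.
case: i Hi1 Hi2 => [|j] // _ Hj.
have Hsz := gw_sz.
have Ef4 : fib k.+4 = fib k.+3 + fib k.+2 by [].
have Ef3 : fib k.+3 = fib k.+2 + fib k.+1 by [].
have Ef5 : fib k.+4.+1 = fib k.+4 + fib k.+3 by [].
have Ef6 : fib k.+4.+2 = fib k.+4.+1 + fib k.+4 by [].
rewrite (hs k.+3) ?Hsz //.
rewrite addnS (hs k.+4.+1) //; last by rewrite Hsz; lia.
rewrite (gwS k.+2) (gwS k.+1) -catA nth_cat Hsz.
rewrite (_ : (fib k.+4 + j < fib k.+4) = false); last lia.
rewrite addKn nth_cat Hsz.
have Hn : golden_word k.+3 = golden_word k.+2 ++ golden_word k.+1 by [].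
case: ltnP => H.
  transitivity (nth A (golden_word k.+2 ++ golden_word k.+1) j); first by [].
  by rewrite nth_cat Hsz H.
transitivity (nth A (golden_word k.+2 ++ golden_word k.+1) j); first by [].
rewrite nth_cat Hsz (_ : (j < fib k.+3) = false); last lia.
have H2 : j - fib k.+3 < size (golden_word k.+1).
  rewrite Hsz. lia.
by rewrite (gw_pre k.+1) ?Hsz; [rewrite gw_pre | lia].
Qed.
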